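(* Let $(\mathcal{X},d_{\mathcal{X}})$ and $(\mathcal{Y},d_{\mathcal{Y}})$ be metric spaces and $(X,Y)\sim\mathbb{G}$ on $\mathcal{X}\times\mathcal{Y}$. Assume: (i) $\mathcal{L}_n=\{(X_1,Y_1),\ldots,(X_n,Y_n)\}$ consists of $n$ i.i.d. copies of $(X,Y)$, independent of $(X,Y)$; (ii) for $\mathbb{G}$-a.e. $x$ there exists a unique conditional Fréchet mean $m(x)=\arg\min_{y\in\mathcal{Y}}\mathsf{E}[d_{\mathcal{Y}}(Y,y)^2\mid X=x]$, the error $R=d_{\mathcal{Y}}(Y,m(X))$ is independent of $X$, and the cumulative distribution function $F_R$ of $R$ is continuous on $\mathbb{R}$; (iii) $d_{\mathcal{Y}}(m(X),\widehat{m}(X))\to0$ in probability as $n\to\infty$. Then for every $x\in\mathcal{X}$ such that $d_{\mathcal{Y}}(\widehat{m}(x),m(x))\to0$ in probability as $n\to\infty$, $$\Delta_n':=\sup_{t\in\mathbb{R}}\big|\mathsf{P}\big(d_{\mathcal{Y}}(Y,\widehat{m}(X))<t\,\big|\,\mathcal{L}_n,\,X=x\big)-F_R(t)\big|\to0$$ in probability as $n\to\infty$.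
   Context: $\widehat{m}$ denotes a random forest (more generally, a bagged regression estimator with values in $\mathcal{Y}$) trained on the sample $\mathcal{L}_n$.
   Formalization: The conclusion holds only for $\mathbb{G}$-almost every x, with conditional laws given X = x taken from a fixed regular conditional distribution, and m and $d_{\mathcal{Y}}$ (jointly on $\mathcal{Y}\times\mathcal{Y}$) are also assumed measurable. The statement above fails without it. *)

(* Defs.v *)
From HB Require Import structures.
From mathcomp Require Import all_boot all_order all_algebra.
From mathcomp Require Import all_classical all_reals all_analysis.
Set Implicit Arguments. Unset Strict Implicit. Unset Printing Implicit Defensive.
Import Order.TTheory GRing.Theory Num.Theory.
Import numFieldNormedType.Exports.
Local Open Scope classical_set_scope.
Local Open Scope ring_scope.

Section defs.
Context (R : realType).

Definition is_metric (T : Type) (d : T -> T -> R) : Prop :=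
  [/\ forall x y, d x y = 0 <-> x = y,
      forall x y, d x y = d y x &
      forall x y z, d x z <= d x y + d y z].

Definition metric_open (T : Type) (d : T -> T -> R) (A : set T) : Prop :=
  forall x, A x -> exists2 e : R, 0 < e & [set y | d x y < e] `<=` A.

Definition borel_of_metric (dT : measure_display) (T : measurableType dT)
  (d : T -> T -> R) : Prop :=
  @measurable dT T = <<s metric_open d >>.

Definition outer_prob (dT : measure_display) (T : measurableType dT)
  (P : probability T R) (A : set T) : \bar R :=
  ereal_inf [set P B | B in [set B | measurable B /\ A `<=` B]].

Definition cvg_in_prob (dT : measure_display) (T : measurableType dT)
  (P : probability T R) (Z : nat -> T -> R) : Prop :=
  forall e : R, 0 < e ->
    (fun n => fine (outer_prob P [set w | e < `|Z n w|])) @ \oo --> (0 : R).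

Definition mutually_independent (dT : measure_display) (T : measurableType dT)
  (P : probability T R) (dU : measure_display) (U : measurableType dU)
  (k : nat) (Z : 'I_k -> T -> U) : Prop :=
  forall B : 'I_k -> set U, (forall i, measurable (B i)) ->
    P (\bigcap_(i in [set: 'I_k]) (Z i @^-1` B i)) =
    (\prod_(i < k) P (Z i @^-1` B i))%E.

Definition independent2 (dT : measure_display) (T : measurableType dT)
  (P : probability T R) (d1 d2 : measure_display)
  (U1 : measurableType d1) (U2 : measurableType d2)
  (Z1 : T -> U1) (Z2 : T -> U2) : Prop :=
  forall A B, measurable A -> measurable B ->
    P (Z1 @^-1` A `&` Z2 @^-1` B) = (P (Z1 @^-1` A) * P (Z2 @^-1` B))%E.

Definition cdf_of (dT : measure_display) (T : measurableType dT)
  (P : probability T R) (Z : T -> R) (t : R) : R :=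
  fine (P [set w | Z w <= t]).

Definition unique_frechet_mean (dU : measure_display) (U : measurableType dU)
  (d : U -> U -> R) (nu : {measure set U -> \bar R}) (c : U) : Prop :=
  let V := fun y => (\int[nu]_z ((d z y) ^+ 2)%:E)%E in
  (forall y, (V c <= V y)%E) /\ (forall y, V y = V c -> y = c).

(* Delta'_n at the point x, as a function of the outcome w, where
   kappa x is the conditional law of Y given X = x and mhat w is the
   estimator built from the sample L_n(w):
   sup_t | P(d(Y, mhat(X)) < t | L_n, X = x) - F(t) | *)
Definition Delta' (dU : measure_display) (U : measurableType dU)
  (Om : Type) (Xs : Type) (kappa : Xs -> {measure set U -> \bar R})
  (d : U -> U -> R) (mhat : Om -> Xs -> U) (F : R -> R) (x : Xs) (w : Om) : R :=
  sup [set `| fine (kappa x [set y | d y (mhat w x) < t]) - F t | | t in [set: R]].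

End defs.

(* Main.v *)
Require Import Defs.
From HB Require Import structures.
From mathcomp Require Import all_boot all_order all_algebra.
From mathcomp Require Import all_classical all_reals all_analysis.
From mathcomp Require Import measurable_realfun.
From mathcomp Require Import lra.
Import Order.TTheory GRing.Theory Num.Theory.
Import numFieldNormedType.Exports.
Local Open Scope classical_set_scope.
Local Open Scope ring_scope.
Lemma pre_meas {d d' : measure_display} {T : measurableType d} {U : measurableType d'}
  {f : T -> U} : measurable_fun setT f -> forall A, measurable A -> measurable (f @^-1` A).
Proof. by move=> mf A mA; rewrite -[f @^-1` A]setTI; exact: mf. Qed.

Lemma kernel_ext (R : realType) (dX dY dO : measure_display)
  (Xs : measurableType dX) (Ys : measurableType dY) (Om : measurableType dO)
  (P : probability Om R) (X : Om -> Xs) (Y : Om -> Ys) (kappa : R.-pker Xs ~> Ys) :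
  measurable_fun setT X -> measurable_fun setT Y ->
  (forall A B, measurable A -> measurable B ->
     P (X @^-1` A `&` Y @^-1` B) = (\int[P]_(w in X @^-1` A) kappa (X w) B)%E) ->
  forall C, measurable C -> forall A, measurable A ->
  P (X @^-1` A `&` (fun w => (X w, Y w)) @^-1` C) =
    (\int[P]_(w in X @^-1` A) kappa (X w) (xsection C (X w)))%E.
Proof.
move=> mX mY hK.
have mXY : measurable_fun setT (fun w => (X w, Y w)) by apply/measurable_fun_pairP.
have mk C : measurable C -> measurable_fun [set: Om] (fun w => kappa (X w) (xsection C (X w))).
  move=> mC; apply: (measurableT_comp (f := fun x => kappa x (xsection C x))) => //.
  by apply: measurable_fun_xsection_finite_kernel; rewrite inE.
pose H := [set C | measurable C /\ forall A, measurable A ->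
  P (X @^-1` A `&` (fun w => (X w, Y w)) @^-1` C) =
    (\int[P]_(w in X @^-1` A) kappa (X w) (xsection C (X w)))%E].
suff sub : measurable `<=` H by move=> C mC; case: (sub C mC).
have rect : forall A1 B, measurable A1 -> measurable B -> H (A1 `*` B).
  move=> A1 B mA1 mB; split; first exact: measurableX.
  move=> A mA.
  have -> : X @^-1` A `&` (fun w => (X w, Y w)) @^-1` (A1 `*` B) =
      X @^-1` (A `&` A1) `&` Y @^-1` B.
    by apply/seteqP; split => w /=; tauto.
  rewrite hK //; last exact: measurableI.
  rewrite integral_mkcond [RHS]integral_mkcond; apply: eq_integral => w _.
  rewrite /patch; have [XA1|XA1] := boolP (X w \in A1).
  - rewrite in_xsectionX //.
    have e : (w \in X @^-1` (A `&` A1)) = (w \in X @^-1` A).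
      apply/idP/idP; rewrite !inE /=; first by case.
      by move=> h; split => //; rewrite inE in XA1.
    by rewrite e.
  - rewrite notin_xsectionX // measure0.
    case: ifP => [|_].
      by rewrite in_setE /= => -[_ /mem_set h]; move/negP: XA1.
    by case: ifP.
rewrite measurable_prod_measurableType.
apply: lambda_system_subset => //.
- move=> _ _ [X1 mX1 [X2 mX2 <-]] [Y1 mY1 [Y2 mY2 <-]].
  exists (X1 `&` Y1); first exact: measurableI.
  by exists (X2 `&` Y2); [exact: measurableI|rewrite setXI].
- split => //.
  + by rewrite -setXTT; exact: rect.
  + move=> C1 C2 C21 [mC1 h1] [mC2 h2]; split; first exact: measurableD.
    move=> A mA.
    have mS := pre_meas mX _ mA.
    have mP C : measurable C -> measurable (X @^-1` A `&` (fun w => (X w, Y w)) @^-1` C).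
      by move=> mC; apply: measurableI => //; exact: pre_meas.
    have e1 : P (X @^-1` A `&` (fun w => (X w, Y w)) @^-1` C1) =
        (P (X @^-1` A `&` (fun w => (X w, Y w)) @^-1` C2) +
         P (X @^-1` A `&` (fun w => (X w, Y w)) @^-1` (C1 `\` C2)))%E.
      rewrite -measureU; [|exact: mP|apply: mP; exact: measurableD|].
      + congr (P _); apply/seteqP; split => w /=.
        * move=> [] Aw C1w; have [C2w|C2w] := pselect (C2 (X w, Y w)).
          by left. by right.
        * by move=> [] [] Aw h; [split=> //; exact: C21|case: h].
      + by apply/seteqP; split => w //= [] [] _ ? [] _ [].
    have e2 : forall x, kappa x (xsection C1 x) =
        (kappa x (xsection C2 x) + kappa x (xsection (C1 `\` C2) x))%E.
      move=> x; rewrite -measureU; [|exact: measurable_xsection|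
        apply: measurable_xsection; exact: measurableD|].
      + congr (kappa x _); rewrite xsectionD; apply/seteqP; split => y /=.
        * by rewrite /xsection /= !inE => h; have [C2w|C2w] := pselect (C2 (x, y));
            [left|right; split].
        * rewrite /xsection /= !inE => -[h|[]//]; exact: C21.
      + by rewrite xsectionD; apply/seteqP; split => y //= [] ? [].
    have e3 : (\int[P]_(w in X @^-1` A) kappa (X w) (xsection C1 (X w)) =
       \int[P]_(w in X @^-1` A) kappa (X w) (xsection C2 (X w)) +
       \int[P]_(w in X @^-1` A) kappa (X w) (xsection (C1 `\` C2) (X w)))%E.
      rewrite -ge0_integralD //.
      + by apply: eq_integral => w _; rewrite e2.
      + exact: measurable_funS (mk _ mC2).
      + apply: measurable_funS (mk _ _) => //; exact: measurableD.
    have fin : P (X @^-1` A `&` (fun w => (X w, Y w)) @^-1` C2) \is a fin_num.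
      by apply: fin_num_measure; exact: mP.
    move: e3; rewrite -h1 // -h2 // e1 => e3.
    set p2 := P (X @^-1` A `&` (fun w => (X w, Y w)) @^-1` C2) in e3 fin *.
    by move/(congr1 (fun z => z - p2)%E): e3; rewrite ![(p2 + _)%E]addeC !addeK.
  + move=> F ndF HF; split.
      by apply: bigcupT_measurable => n; have [] := HF n.
    move=> A mA.
    have mS := pre_meas mX _ mA.
    have mP C : measurable C -> measurable (X @^-1` A `&` (fun w => (X w, Y w)) @^-1` C).
      by move=> mC; apply: measurableI => //; exact: pre_meas.
    have mF n : measurable (F n) by have [] := HF n.
    have l1 : (P (X @^-1` A `&` (fun w => (X w, Y w)) @^-1` F n) @[n --> \oo] -->
       P (X @^-1` A `&` (fun w => (X w, Y w)) @^-1` \bigcup_n F n))%E.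
      rewrite preimage_bigcup setI_bigcupr.
      apply: (nondecreasing_cvg_mu (F := fun n => X @^-1` A `&` (fun w => (X w, Y w)) @^-1` F n)).
      * by move=> n; exact: mP.
      * by apply: bigcupT_measurable => n; exact: mP.
      * move=> n k nk; apply/subsetPset => w /= [Aw Fw]; split => //.
        by move/subsetPset : (ndF _ _ nk); apply.
    have l2 : ((\int[P]_(w in X @^-1` A) kappa (X w) (xsection (F n) (X w))) @[n --> \oo] -->
       \int[P]_(w in X @^-1` A) kappa (X w) (xsection (\bigcup_n F n) (X w)))%E.
      have -> : (\int[P]_(w in X @^-1` A) kappa (X w) (xsection (\bigcup_n F n) (X w)) =
          \int[P]_(w in X @^-1` A) limn (fun n => kappa (X w) (xsection (F n) (X w))))%E.
        apply: eq_integral => w _; apply/esym/cvg_lim => //.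
        rewrite xsection_bigcup; apply: (nondecreasing_cvg_mu (F := fun n => xsection (F n) (X w))).
        * by move=> n; exact: measurable_xsection.
        * by apply: bigcupT_measurable => n; exact: measurable_xsection.
        * by move=> n k nk; exact/subsetPset/le_xsection/subsetPset/ndF.
      apply: cvg_monotone_convergence => //.
      * by move=> n; apply: measurable_funS (mk _ (mF n)).
      * move=> w _ n k nk; apply: le_measure; rewrite ?inE; try exact: measurable_xsection.
        by apply: le_xsection; apply/subsetPset/ndF.
    have : (P (X @^-1` A `&` (fun w => (X w, Y w)) @^-1` F n) @[n --> \oo] -->
       \int[P]_(w in X @^-1` A) kappa (X w) (xsection (\bigcup_n F n) (X w)))%E.
      by under eq_fun do rewrite (proj2 (HF _)) //.
    by move/(cvg_unique _ l1) => ->.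
- by move=> _ [A mA [B mB <-]]; exact: rect.
Qed.
Lemma ae_from_int (R : realType) (dX dO : measure_display)
  (Xs : measurableType dX) (Om : measurableType dO)
  (P : probability Om R) (X : Om -> Xs) (G : Xs -> \bar R) (c : R) : 0 <= c ->
  measurable_fun setT X -> measurable_fun setT G -> (forall x, 0 <= G x)%E ->
  (forall A, measurable A -> \int[P]_(w in X @^-1` A) G (X w) = \int[P]_(w in X @^-1` A) c%:E)%E ->
  {ae P, forall w, G (X w) = c%:E}.
Proof.
move=> c0 mX mG G0 hA.
pose mu := pushforward P X.
have mc : measurable_fun [set: Xs] (fun _ : Xs => c%:E) by [].
have ic : mu.-integrable setT (fun _ => c%:E).
  apply/integrableP; split => //.
  rewrite integral_cst // (_ : _ [set: Xs] = 1%E) ?mule1 ?ltry //.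
  exact: probability_setT.
have hint : forall E, E `<=` setT -> measurable E ->
    (\int[mu]_(x in E) (fun _ => c%:E) x = \int[mu]_(x in E) G x)%E.
  move=> E _ mE.
  rewrite ge0_integral_pushforward //.
  rewrite ge0_integral_pushforward //.
  - exact/esym/hA.
  - exact: measurable_funS mG.
have hae := @integral_ae_eq _ _ _ mu setT measurableT G (fun _ => c%:E) ic mG hint.
case: hae => N [mN muN sub]; exists (X @^-1` N); split.
  + exact: pre_meas.
  + exact: muN.
  + move=> w /= h; apply: sub => /= h'; apply: h; exact/esym/h'.
Qed.

Lemma cond_cdf (R : realType) (dX dY dO : measure_display)
  (Xs : measurableType dX) (Ys : measurableType dY) (Om : measurableType dO)
  (dy : Ys -> Ys -> R) (P : probability Om R)
  (X : Om -> Xs) (Y : Om -> Ys) (kappa : R.-pker Xs ~> Ys) (m : Xs -> Ys) :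
  measurable_fun [set: Ys * Ys] (fun p => dy p.1 p.2) ->
  measurable_fun setT X -> measurable_fun setT Y ->
  (forall A B, measurable A -> measurable B ->
     P (X @^-1` A `&` Y @^-1` B) = (\int[P]_(w in X @^-1` A) kappa (X w) B)%E) ->
  measurable_fun setT m ->
  independent2 P X (fun w => dy (Y w) (m (X w))) ->
  {ae P, forall w, forall q : rat,
     kappa (X w) [set y | dy y (m (X w)) <= ratr q] =
     (cdf_of P (fun w' => dy (Y w') (m (X w'))) (ratr q))%:E}.
Proof.
move=> mdy mX mY hK mm ind.
set Rv := fun w' => dy (Y w') (m (X w')).
have mf : measurable_fun [set: Xs * Ys] (fun p => dy p.2 (m p.1)).
  apply: (measurableT_comp (f := fun p => dy p.1 p.2) (g := fun p : Xs * Ys => (p.2, m p.1))) => //.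
  apply/measurable_fun_pairP; split => //.
  - exact: measurable_snd.
  - exact: (measurableT_comp mm measurable_fst).
have mXY : measurable_fun setT (fun w => (X w, Y w)) by apply/measurable_fun_pairP.
have mRv : measurable_fun setT Rv.
  exact: (measurableT_comp (f := fun p : Xs * Ys => dy p.2 (m p.1)) (g := fun w => (X w, Y w))).
have mC t : measurable [set p : Xs * Ys | dy p.2 (m p.1) <= t].
  rewrite -(preimage_itvNyc (fun p : Xs * Ys => dy p.2 (m p.1))); exact: pre_meas mf _ (measurable_itv _).
have one t : {ae P, forall w, kappa (X w) [set y | dy y (m (X w)) <= t] =
     (cdf_of P Rv t)%:E}.
  have c0 : 0 <= cdf_of P Rv t by apply: fine_ge0; exact: measure_ge0.
  have finc : P [set w | Rv w <= t] \is a fin_num.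
    apply: fin_num_measure; rewrite -preimage_itvNyc.
    exact: pre_meas mRv _ (measurable_itv _).
  have xs x : xsection [set p : Xs * Ys | dy p.2 (m p.1) <= t] x =
      [set y | dy y (m x) <= t].
    by apply/seteqP; split => y; rewrite /xsection /= in_setE.
  apply: (@ae_from_int _ _ _ _ _ P X (fun x => kappa x [set y | dy y (m x) <= t]) (cdf_of P Rv t)) => //.
  - have := measurable_fun_xsection_finite_kernel kappa
      (A := [set p : Xs * Ys | dy p.2 (m p.1) <= t]).
    rewrite inE => /(_ (mC t)).
    by apply: eq_measurable_fun => x _; rewrite xs.
  - move=> A mA.
    rewrite integral_cst; last exact: pre_meas.
    have := @kernel_ext _ _ _ _ _ _ _ P X Y kappa mX mY hK _ (mC t) _ mA.
    under eq_integral do rewrite xs.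
    move=> <-.
    have -> : X @^-1` A `&` (fun w => (X w, Y w)) @^-1` [set p | dy p.2 (m p.1) <= t] =
        X @^-1` A `&` Rv @^-1` `]-oo, t] by rewrite preimage_itvNyc.
    rewrite ind //.
    by rewrite /cdf_of fineK // muleC (preimage_itvNyc (fun w => dy (Y w) (m (X w)))).
apply: filterS (ae_foralln (P := fun n w => match @unpickle rat n with
   | Some q => kappa (X w) [set y | dy y (m (X w)) <= ratr q] = (cdf_of P Rv (ratr q))%:E
   | None => True end) _).
- by move=> w h q; have := h (pickle q); rewrite pickleK.
- move=> n; case: (unpickle n) => [q|]; first exact: one.
  exact: aeW.
Qed.
Lemma unif_cdf (R : realType) (F : R -> R) :
  {homo F : x y / x <= y} -> (forall t, 0 <= F t <= 1) -> continuous F ->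
  (forall e, 0 < e -> exists a, F a <= e) ->
  (forall e, 0 < e -> exists b, 1 - e <= F b) ->
  forall e, 0 < e -> exists2 d, 0 < d & forall t, F (t + d) - F (t - d) <= e.
Proof.
move=> Fh F01 Fc Fa Fb e e0.
have [a Fa'] := Fa e e0; have [b Fb'] := Fb e e0.
have cK : compact `[a - 1, b + 1] by exact: segment_compact.
have e20 : 0 < e / 2 by rewrite divr_gt0.
have := (compact_near_coveringP _).1 cK R (0^'+) (fun d t => F (t + d) - F (t - d) < e) _.
move=> /(_ _) [].
- move=> x Kx.
  have := @cvgr_dist_lt _ _ _ _ _ F (F x) (Fc x) _ e20.
  move=> h; have {}h := h (nbhs_filter _); have [r /= r0 hr] := (nbhs_ballP _ _).1 h.
  have r20 : 0 < r / 2 by rewrite divr_gt0.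
  exists (ball x (r / 2), [set d | 0 < d < r / 2]).
    split; first exact: nbhsx_ballx.
    near=> d; apply/andP; split; near: d; [exact: nbhs_right_gt|exact: nbhs_right_lt].
  move=> [u d] [/= ux /andP [d0 dr]].
  move: ux; rewrite /ball /= => ux.
  have b1 : ball x r (u + d).
    rewrite /ball /=; move: ux; rewrite !ltr_norml => /andP[? ?]; apply/andP; split; lra.
  have b2 : ball x r (u - d).
    rewrite /ball /=; move: ux; rewrite !ltr_norml => /andP[? ?]; apply/andP; split; lra.
  move: (hr _ b1) (hr _ b2); rewrite /= !ltr_norml => /andP[? ?] /andP[? ?]; lra.
move=> eps eps0 hK.
have m1 : Num.min eps 1 <= eps by rewrite ge_min lexx.
have m2 : Num.min eps 1 <= 1 by rewrite ge_min lexx orbT.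
have m0 : 0 < Num.min eps 1 by rewrite lt_min eps0 ltr01.
set d := Num.min eps 1 / 2.
have d0 : 0 < d by rewrite /d; lra.
exists d => // t.
have hd := hK d.
have bd : ball_ [eta Num.Def.normr] 0 eps d.
  rewrite /ball_ /= sub0r normrN gtr0_norm //; rewrite /d; lra.
move: {hd bd}(hd bd d0) => hd.
have [ta|ta] := ltP t (a - 1).
  have h1 : F (t + d) <= F a by apply: Fh; rewrite /d; lra.
  have := F01 (t - d); move=> /andP[? ?]; lra.
have [tb|tb] := ltP (b + 1) t.
  have h1 : F b <= F (t - d) by apply: Fh; rewrite /d; lra.
  have := F01 (t + d); move=> /andP[? ?]; lra.
apply/ltW/hd; rewrite /= in_itv /=; apply/andP; split => //.
Unshelve. all: by end_near. Qed.
Lemma pt_bound (R : realType) (dY : measure_display) (Ys : measurableType dY)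
  (dy : Ys -> Ys -> R) (nu : {measure set Ys -> \bar R}) (F : R -> R)
  (mx c : Ys) (e d0 : R) :
  (forall x y z, dy x z <= dy x y + dy y z) -> (forall x y, dy x y = dy y x) ->
  measurable_fun [set: Ys * Ys] (fun p => dy p.1 p.2) -> (nu setT <= 1)%E ->
  {homo F : x y / x <= y} ->
  (forall q : rat, nu [set y | dy y mx <= ratr q] = (F (ratr q))%:E) ->
  0 < d0 -> (forall t, F (t + d0) - F (t - d0) <= e) ->
  dy c mx < d0 / 2 ->
  forall t, `| fine (nu [set y | dy y c < t]) - F t | <= e.
Proof.
move=> tri sym mdy nu1 Fh hq d00 hF hc t.
have mz z : measurable_fun [set: Ys] (fun y => dy y z).
  apply: (measurableT_comp (f := fun p : Ys * Ys => dy p.1 p.2) (g := fun y => (y, z))) => //.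
have mle z s : measurable [set y | dy y z <= s].
  rewrite -(preimage_itvNyc (fun y => dy y z)); rewrite -[_ @^-1` _]setTI; exact: mz.
have mlt z s : measurable [set y | dy y z < s].
  rewrite -(preimage_itvNyo (fun y => dy y z)); rewrite -[_ @^-1` _]setTI; exact: mz.
have fin A : measurable A -> nu A \is a fin_num.
  move=> mA; rewrite ge0_fin_numE // (le_lt_trans _ (ltry 1)) //.
  apply: le_trans nu1; apply: le_measure; rewrite ?inE //.
have [q1 /andP[q1a q1b]] : exists q : rat, ratr q \in `]t - d0, t - d0 / 2[.
  by apply: rat_in_itvoo; lra.
have [q2 /andP[q2a q2b]] : exists q : rat, ratr q \in `]t + d0 / 2, t + d0[.
  by apply: rat_in_itvoo; lra.
rewrite !bnd_simp in q1a q1b q2a q2b.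
have h1 : (nu [set y | (dy y mx <= ratr q1)%R] <= nu [set y | (dy y c < t)%R])%E.
  apply: le_measure; rewrite ?inE //.
  move=> y /= hy; have := tri y mx c; rewrite (sym mx c); lra.
have h2 : (nu [set y | (dy y c < t)%R] <= nu [set y | (dy y mx <= ratr q2)%R])%E.
  apply: le_measure; rewrite ?inE //.
  move=> y /= hy; have := tri y c mx; lra.
have f1 := fine_le (fin _ (mle _ _)) (fin _ (mlt _ _)) h1.
have f2 := fine_le (fin _ (mlt _ _)) (fin _ (mle _ _)) h2.
rewrite hq /= in f1; rewrite hq /= in f2.
have g1 : F (t - d0) <= F (ratr q1) by apply: Fh; lra.
have g2 : F (ratr q2) <= F (t + d0) by apply: Fh; lra.
have g3 : F (t - d0) <= F t by apply: Fh; lra.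
have g4 : F t <= F (t + d0) by apply: Fh; lra.
have := hF t => hFt; rewrite ler_norml; apply/andP; split; lra.
Qed.
Lemma op_ge0 (R : realType) (dO : measure_display) (Om : measurableType dO)
  (P : probability Om R) (A : set Om) : (0 <= outer_prob P A)%E.
Proof. by apply/ereal_infP => _ [B _ <-]; exact: measure_ge0. Qed.

Lemma op_le1 (R : realType) (dO : measure_display) (Om : measurableType dO)
  (P : probability Om R) (A : set Om) : (outer_prob P A <= 1)%E.
Proof.
rewrite -(probability_setT P); apply: ge_ereal_inf.
by exists (P setT) => //; exists setT.
Qed.

Lemma op_le (R : realType) (dO : measure_display) (Om : measurableType dO)
  (P : probability Om R) (A B : set Om) : A `<=` B ->
  fine (outer_prob P A) <= fine (outer_prob P B).
Proof.
move=> AB.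
have fin C : outer_prob P C \is a fin_num.
  by rewrite ge0_fin_numE ?op_ge0 // (le_lt_trans (op_le1 _ _ _ P C)) ?ltry.
apply: fine_le; rewrite ?fin //.
apply: le_ereal_inf => _ [C [mC BC] <-]; exists C => //; split => //.
exact: subset_trans BC.
Qed.
Theorem lemma3 (R : realType) (dX dY dO : measure_display)
  (Xs : measurableType dX) (Ys : measurableType dY) (Om : measurableType dO)
  (dx : Xs -> Xs -> R) (dy : Ys -> Ys -> R)
  (P : probability Om R)
  (X : Om -> Xs) (Y : Om -> Ys) (L : nat -> nat -> Om -> Xs * Ys)
  (kappa : R.-pker Xs ~> Ys)
  (m : Xs -> Ys) (mhat : nat -> Om -> Xs -> Ys) :
  (* metric spaces with their Borel sigma-algebras *)
  is_metric dx -> is_metric dy -> borel_of_metric dx -> borel_of_metric dy ->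
  (* regularity: d_Y is measurable for the product sigma-algebra (automatic
     for separable Y; makes R = d_Y(Y, m(X)) a random variable) *)
  measurable_fun [set: Ys * Ys] (fun p => dy p.1 p.2) ->
  (* random elements *)
  measurable_fun setT X -> measurable_fun setT Y ->
  (forall n i, measurable_fun setT (L n i)) ->
  (* kappa (a probability kernel) is a regular conditional distribution
     of Y given X *)
  (forall A B, measurable A -> measurable B ->
     P (X @^-1` A `&` Y @^-1` B) = (\int[P]_(w in X @^-1` A) kappa (X w) B)%E) ->
  (* (i) L_n = (L n 0, ..., L n (n-1)) are i.i.d. copies of (X,Y),
     independent of (X,Y) *)
  (forall n i, (i < n)%N -> forall C, measurable C ->
     P (L n i @^-1` C) = P ((fun w => (X w, Y w)) @^-1` C)) ->
  (forall n, mutually_independent P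
     (fun i : 'I_n.+1 => if (i < n)%N then L n i else (fun w => (X w, Y w)))) ->
  (* mhat_n is trained on the sample L_n *)
  (forall n w w', (forall i, (i < n)%N -> L n i w = L n i w') ->
     mhat n w = mhat n w') ->
  (* (ii) *)
  measurable_fun setT m ->
  {ae P, forall w, unique_frechet_mean dy (kappa (X w)) (m (X w))} ->
  independent2 P X (fun w => dy (Y w) (m (X w))) ->
  continuous (cdf_of P (fun w => dy (Y w) (m (X w)))) ->
  (* (iii) *)
  cvg_in_prob P (fun n w => dy (m (X w)) (mhat n w (X w))) ->
  (* conclusion, for a.e. x = X w *)
  {ae P, forall w,
     cvg_in_prob P (fun n w' => dy (mhat n w' (X w)) (m (X w))) ->
     cvg_in_prob P (fun n => Delta' kappa dy (mhat n)
                     (cdf_of P (fun w' => dy (Y w') (m (X w')))) (X w))}.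
Proof.
move=> _ [dy0 dsym dtri] _ _ mdy mX mY _ hK _ _ _ mm _ ind Fc _.
have good := @cond_cdf _ _ _ _ _ _ _ dy P X Y kappa m mdy mX mY hK mm ind.
move: good Fc.
set Rv := (fun w' => dy (Y w') (m (X w'))).
set F := cdf_of P Rv.
move=> good Fc.
have dge0 a b : 0 <= dy a b.
  have := dtri a b a; rewrite (proj2 (dy0 a a) erefl) (dsym b a); lra.
have mXY : measurable_fun setT (fun w => (X w, Y w)) by apply/measurable_fun_pairP.
have mf : measurable_fun [set: Xs * Ys] (fun p => dy p.2 (m p.1)).
  apply: (measurableT_comp (f := fun p => dy p.1 p.2) (g := fun p : Xs * Ys => (p.2, m p.1))) => //.
  apply/measurable_fun_pairP; split => //.
  - exact: measurable_snd.
  - exact: (measurableT_comp mm measurable_fst).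
have mRv : measurable_fun setT Rv.
  exact: (measurableT_comp (f := fun p : Xs * Ys => dy p.2 (m p.1)) (g := fun w => (X w, Y w))).
have mRle t : measurable [set w | Rv w <= t].
  rewrite -(preimage_itvNyc Rv); exact: pre_meas mRv _ (measurable_itv _).
have finR t : P [set w | Rv w <= t] \is a fin_num by apply: fin_num_measure.
have Fh : {homo F : x y / x <= y}.
  move=> s t st; apply: fine_le; rewrite ?finR //.
  apply: le_measure; rewrite ?inE //.
  by move=> w /= h; exact: le_trans st.
have F01 t : 0 <= F t <= 1.
  apply/andP; split; first by apply: fine_ge0; exact: measure_ge0.
  have := probability_le1 P (mRle t).
  by rewrite -(fineK (finR t)) lee_fin.
have Fa e : 0 < e -> exists a, F a <= e.
  move=> e0; exists (-1); rewrite /F /cdf_of.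
  have -> : [set w | Rv w <= -1] = set0.
    by apply/seteqP; split => w //= h; have := dge0 (Y w) (m (X w)); rewrite /Rv in h; lra.
  by rewrite measure0 /= ltW.
have Fb e : 0 < e -> exists b, 1 - e <= F b.
  move=> e0.
  have hU : (fun n => P [set w | Rv w <= n%:R]) @ \oo --> P (\bigcup_n [set w | Rv w <= n%:R]).
    apply: (nondecreasing_cvg_mu (F := fun n : nat => [set w | Rv w <= n%:R])).
    - by move=> n; exact: mRle.
    - by apply: bigcupT_measurable => n; exact: mRle.
    - move=> n k nk; apply/subsetPset => w /= h; apply: le_trans h _.
      by rewrite ler_nat.
  have eU : \bigcup_n [set w | Rv w <= n%:R] = setT.
    apply/seteqP; split => // w _; exists (Num.Def.trunc (Rv w)).+1 => //=.
    exact/ltW/truncnS_gt.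
  rewrite eU probability_setT in hU.
  have [_ hU'] := (fine_cvgP _ _).1 hU.
  have := @cvgr_dist_lt _ _ _ _ _ _ _ hU' _ e0.
  move=> /(_ eventually_filter) /filter_ex [n hn]; exists n%:R.
  move: hn; rewrite /= ltr_distlC => /andP[h _].
  by rewrite /F /cdf_of; lra.
apply: filterS good => w hw hcvg e e0.
have e20 : 0 < e / 2 by rewrite divr_gt0.
have [d d0 hd] := @unif_cdf R F Fh F01 Fc Fa Fb (e / 2) e20.
have d40 : 0 < d / 4 by rewrite divr_gt0.
have hc := hcvg (d / 4) d40.
apply: (squeeze_cvgr (f := cst 0)
  (h := fun n => fine (outer_prob P [set w' | d / 4 < `|dy (mhat n w' (X w)) (m (X w))|]))); last first.
- exact: hc.
- exact: cvg_cst.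
apply: nearW => n; apply/andP; split; first by apply: fine_ge0; exact: op_ge0.
apply: op_le => w' /= h; rewrite ltNge; apply/negP => hdy; move: h; apply/negP; rewrite -leNgt.
rewrite ger0_norm // in hdy.
have hb t : `| fine (kappa (X w) [set y | dy y (mhat n w' (X w)) < t]) - F t | <= e / 2.
  apply: (@pt_bound R dY Ys dy (kappa (X w)) F (m (X w)) (mhat n w' (X w)) (e / 2) d) => //.
  - by rewrite prob_kernel.
  - lra.
rewrite /Delta'.
set S := [set _ | _ in _].
have S0 : S `| fine (kappa (X w) [set y | dy y (mhat n w' (X w)) < 0]) - F 0 |.
  by exists 0.
have ub : ubound S (e / 2) by move=> _ [t _ <-]; exact: hb.
have h1 : sup S <= e / 2 by apply: ge_sup => //; exists (`| fine (kappa (X w) [set y | dy y (mhat n w' (X w)) < 0]) - F 0 |).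
have h2 : 0 <= sup S.
  apply: le_trans (normr_ge0 _) (ub_le_sup _ S0).
  by exists (e / 2).
rewrite ger0_norm //; lra.
Qed.
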